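(* Let $\mathbb{F}$ be a field of characteristic $2$, $V$ an $n$-dimensional $\mathbb{F}$-vector space and $b$ a non-degenerate symmetric bilinear form on $V$ with attached quadratic form $Q: x\mapsto b(x,x)$. Assume that $\operatorname{Ker} Q$ is totally $b$-singular, and set $\nu := \dim \operatorname{Ker} Q$. Let $\mathcal{V}$ be a linear subspace of $\mathcal{S}_b$ (respectively, of $\mathcal{A}_b$) all of whose elements are nilpotent. Then $\dim \mathcal{V} \le \nu(n-\nu)$ (respectively, $\dim \mathcal{V} \le \nu(n-\nu-1)$).
   Context: $\operatorname{Ker} Q = \{x\in V : Q(x)=0\}$, a linear subspace in characteristic $2$. A subspace $X$ is totally $b$-singular if $b(x,y)=0$ for all $x,y\in X$. $\mathcal{S}_b$ (resp. $\mathcal{A}_b$) is the space of endomorphisms $u$ of $V$ for which $(x,y)\mapsto b(x,u(y))$ is symmetric (resp. alternating, i.e. vanishes on all pairs $(x,x)$). *)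

(* Defs.v *)
From HB Require Import structures.
From mathcomp Require Import all_boot all_order all_algebra.
Set Implicit Arguments. Unset Strict Implicit. Unset Printing Implicit Defensive.
Import GRing.Theory.
Local Open Scope ring_scope.

(* Vectors of V = F^n are row vectors 'rV[F]_n; an endomorphism u of V is
   represented by a matrix M acting on the right: u(y) = y *m M. *)
Definition bform (F : fieldType) (n : nat) (B : 'M[F]_n) (x y : 'rV[F]_n) : F :=
  (x *m B *m y^T) 0 0.

Definition qform (F : fieldType) (n : nat) (B : 'M[F]_n) (x : 'rV[F]_n) : F :=
  bform B x x.

Definition in_Sb (F : fieldType) (n : nat) (B M : 'M[F]_n) : Prop :=
  forall x y : 'rV[F]_n, bform B x (y *m M) = bform B y (x *m M).

Definition in_Ab (F : fieldType) (n : nat) (B M : 'M[F]_n) : Prop :=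
  forall x : 'rV[F]_n, bform B x (x *m M) = 0.

Definition mx_nilpotent (F : fieldType) (n : nat) (M : 'M[F]_n) : Prop :=
  exists k : nat, M ^+ k = 0.

(* Main.v *)
Require Import Defs.
From HB Require Import structures.
From mathcomp Require Import all_boot all_order all_algebra zify.
Import GRing.Theory.
Local Open Scope ring_scope.
Set Implicit Arguments. Unset Strict Implicit. Unset Printing Implicit Defensive.


Section Hom.
Variable (F : fieldType).
Lemma hom_of_linear (U V : vectType F) (f : U -> V) : linear f -> {g : 'Hom(U,V) | forall x, g x = f x}.
Proof.
move=> lf.
pose flM := GRing.isLinear.Build _ _ _ _ f lf.
pose fL : {linear _ -> _} := HB.pack f flM.
by exists (linfun fL) => x; rewrite lfunE.
Qed.

Lemma rep_functional m (f : {linear 'rV[F]_m -> 'M[F]_1}) :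
  exists z : 'cV[F]_m, forall x, x *m z = f x.
Proof.
exists (\col_k (f (delta_mx 0 k)) 0 0) => x.
rewrite [in RHS](row_sum_delta x) linear_sum.
apply/matrixP => a b; rewrite !ord1 !mxE summxE; apply: eq_bigr => k _.
by rewrite linearZ !mxE.
Qed.

Lemma dual_basis m (X : seq 'rV[F]_m) i : free X -> (i < size X)%N ->
  exists z : 'cV[F]_m, forall j, (j < size X)%N -> X`_j *m z = ((i == j)%:R)%:M.
Proof.
move=> fX ltiX.
have [f fP] := @linear_of_free F [the vectType F of 'rV[F]_m] 'M[F]_1 X [seq ((i == j)%:R)%:M | j <- iota 0 (size X)].
have {}fP := fP fX; rewrite size_map size_iota in fP; have {}fP := fP erefl.
have [z zP] := rep_functional f.
exists z => j ltj; rewrite zP.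
have := congr1 (fun s => nth 0 s j) fP.
by rewrite (nth_map 0) // (nth_map 0) ?size_iota // nth_iota.
Qed.

Lemma ortho e (Y Z : {vspace 'rV[F]_e}) :
  (forall y z, y \in Y -> z \in Z -> y *m z^T = 0) -> (\dim Y + \dim Z <= e)%N.
Proof.
move=> oYZ.
set d := \dim Z; set X := vbasis Z.
pose ZM : 'M[F]_(d, e) := \matrix_(i < d) X`_i.
pose g : 'Hom('rV[F]_e, 'rV[F]_d) := linfun (mulmxr ZM^T).
have gE y : g y = y *m ZM^T by rewrite lfunE.
have gE' y i : g y 0 i = (y *m (X`_i)^T) 0 0.
  by rewrite gE !mxE; apply: eq_bigr => k _; rewrite !mxE.
have sY : (Y <= lker g)%VS.
  apply/subvP => y yY; rewrite memv_ker; apply/eqP/rowP => i.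
  by rewrite gE' oYZ ?mxE // vbasis_mem // mem_nth // size_tuple.
have fX : free X by apply: basis_free (vbasisP Z).
have dl i : delta_mx 0 i \in (g @: fullv)%VS.
  have := dual_basis (i := val i) fX; rewrite size_tuple => /(_ (ltn_ord i)) [z zP].
  suff -> : delta_mx 0 i = g z^T by apply: memv_img; apply: memvf.
  apply/rowP => j; rewrite gE'.
  have zj := zP j (ltn_ord j).
  have -> : z^T *m (X`_j)^T = (X`_j *m z)^T by rewrite trmx_mul.
  by rewrite zj !mxE eqxx mulr1n (inj_eq val_inj) eq_sym.
have img : (g @: fullv)%VS = fullv.
  apply/eqP; rewrite eqEsubv subvf /=; apply/subvP => r _.
  rewrite (row_sum_delta r); apply: rpred_sum => i _; exact/rpredZ/dl.
have := limg_ker_dim g fullv.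
rewrite img capfv => H.
have dZ : \dim (fullv : {vspace 'rV[F]_d}) = d by rewrite dimvf /dim /= mul1n.
have de : \dim (fullv : {vspace 'rV[F]_e}) = e by rewrite dimvf /dim /= mul1n.
by rewrite -{3}de -H dZ leq_add2r dimvS.
Qed.
End Hom.


Section Conv.
Variable F : fieldType.
Lemma conv_zero (a h : nat -> F) N :
  (forall m, (N <= m)%N -> a m = 0) -> (forall m, (N <= m)%N -> h m = 0) ->
  (forall m, a m = h m + \sum_(i < m) a i * h (m - i.+1)%N) -> forall m, h m = 0.
Proof.
move=> aN hN rec m; apply/eqP; apply/negPn/negP => hm.
have exh : exists k, h k != 0 := ex_intro _ m hm.
have ubh : forall k, h k != 0 -> (k <= N)%N.
  move=> k hk; rewrite leqNgt; apply/negP => /ltnW /hN /eqP; exact/negP.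
case: (ex_maxnP exh ubh) => p hp pmax.
case: (pickP (fun q : 'I_N => a q != 0)) => [q0 aq0|noa]; last first.
  move: (rec p); rewrite big1 ?addr0 => [ap|i _].
    have : a p = 0.
      case: (ltnP p N) => [ltpN|]; last exact: aN.
      by move: (noa (Ordinal ltpN)) => /= /negbFE /eqP.
    by move=> a0; move: hp; rewrite -ap a0 eqxx.
  case: (ltnP i N) => [ltiN|/aN ->]; last by rewrite mul0r.
  by move: (noa (Ordinal ltiN)) => /= /negbFE /eqP ->; rewrite mul0r.
have exa : exists k, a k != 0 := ex_intro _ (val q0) aq0.
have uba : forall k, a k != 0 -> (k <= N)%N.
  move=> k ak; rewrite leqNgt; apply/negP => /ltnW /aN /eqP; exact/negP.
case: (ex_maxnP exa uba) => q aq qmax.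
set m' := (p + q).+1.
have am : a m' = 0.
  apply/eqP; apply/negPn/negP => /qmax; rewrite /m'; lia.
have hm' : h m' = 0.
  apply/eqP; apply/negPn/negP => /pmax; rewrite /m'; lia.
have ltq : (q < m')%N by rewrite /m'; lia.
move: (rec m'); rewrite am hm' add0r (bigD1 (Ordinal ltq)) //= big1.
  rewrite addr0 => /esym/eqP; rewrite mulf_eq0 (negbTE aq) /=.
  have -> : (m' - q.+1 = p)%N by rewrite /m'; lia.
  by rewrite (negbTE hp).
move=> i /= neq.
have : val i != q by apply: contra neq => /eqP H; apply/eqP/val_inj.
rewrite neq_ltn => /orP [ltiq|ltqi].
  suff -> : h (m' - i.+1)%N = 0 by rewrite mulr0.
  apply/eqP; apply/negPn/negP => /pmax; rewrite /m'; move: ltiq; rewrite /=; move: (nat_of_ord i) => k; lia.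
suff -> : a i = 0 by rewrite mul0r.
apply/eqP; apply/negPn/negP => /qmax; move: ltqi; rewrite /=; move: (nat_of_ord i) => k; lia.
Qed.
End Conv.

Section Gerst.
Variables (F : fieldType) (n : nat).
Implicit Types (U : {vspace 'rV[F]_n}) (W : {vspace 'M[F]_n}).

Definition bmx U : 'M[F]_(\dim U, n) := \matrix_(i < \dim U) (vbasis U)`_i.
Definition ann U : {vspace 'M[F]_n} := lker (linfun (@mulmx F _ _ n (bmx U))).

Lemma vbasis_nth_mem U (i : 'I_(\dim U)) : (vbasis U)`_i \in U.
Proof. by rewrite vbasis_mem // mem_nth // size_tuple. Qed.

Lemma annP U M : reflect (forall y, y \in U -> y *m M = 0) (M \in ann U).
Proof.
rewrite memv_ker lfunE /=.
apply: (iffP eqP) => [H y yU | H].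
  rewrite (coord_vbasis yU) mulmx_suml big1 // => i _.
  have := congr1 (row i) H; rewrite row_mul /bmx rowK row0 => Hi.
  by rewrite -scalemxAl Hi scaler0.
apply/row_matrixP => i; rewrite row_mul /bmx rowK row0 H //; exact: vbasis_nth_mem.
Qed.

Lemma mulmx_exprS (y : 'rV[F]_n) (M : 'M[F]_n) k :
  y *m M ^+ k.+1 = y *m M ^+ k *m M.
Proof. by rewrite exprSr -mulmxE mulmxA. Qed.

Lemma nilp_ge (M : 'M[F]_n) N m : M ^+ N = 0 -> (N <= m)%N -> M ^+ m = 0.
Proof. by move=> HN /subnKC <-; rewrite exprD HN mul0r. Qed.

Lemma inv_pow U (M : 'M[F]_n) : (forall y, y \in U -> y *m M \in U) ->
  forall m y, y \in U -> y *m M ^+ m \in U.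
Proof.
move=> HM; elim=> [|m IH] y yU; first by rewrite expr0 mulmx1.
by rewrite mulmx_exprS; apply: HM; apply: IH.
Qed.

Lemma col1E (y : 'rV[F]_n) j : (col j y == 0) = (y 0 j == 0).
Proof.
apply/eqP/eqP => [/matrixP/(_ 0 0)|H]; first by rewrite !mxE.
by apply/matrixP => a b; rewrite !ord1 !mxE.
Qed.

Lemma entryBZ (A B : 'rV[F]_n) (c : F) j : (A - c *: B) 0 j = A 0 j - c * B 0 j.
Proof. by rewrite !mxE. Qed.
Lemma entryD (A B : 'rV[F]_n) j : (A + B) 0 j = A 0 j + B 0 j.
Proof. by rewrite !mxE. Qed.
Lemma entryZ (A : 'rV[F]_n) (c : F) j : (c *: A) 0 j = c * A 0 j.
Proof. by rewrite !mxE. Qed.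

Lemma nilp_succ (M : 'M[F]_n) : mx_nilpotent M -> exists N, M ^+ N.+1 = 0.
Proof. by case=> N HN; exists N; apply: nilp_ge HN _. Qed.

Lemma gerst d : forall U W, \dim U = d ->
  (forall u, u \in W -> mx_nilpotent u /\ (forall y, y \in U -> y *m u \in U)) ->
  (\dim W <= 'C(d, 2) + \dim (W :&: ann U))%N.
Proof.
elim: d => [|d IH] U W dU HW.
  have -> : 'C(0, 2) = 0%N by [].
  rewrite add0n; apply: dimvS; apply/subvP => u uW; rewrite memv_cap uW /=.
  apply/annP => y; move/eqP: dU; rewrite dimv_eq0 => /eqP ->; rewrite memv0 => /eqP ->.
  exact: mul0mx.
have U0 : U != 0%VS by rewrite -dimv_eq0 dU.
set y0 := vpick U.
have y0U : y0 \in U := memv_pick U.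
have y0nz : y0 != 0 by rewrite vpick0.
have [j yj] : exists j, y0 0 j != 0.
  case: (pickP (fun j => y0 0 j != 0)) => [j yj|H]; first by exists j.
  by case/negP: y0nz; apply/eqP/rowP => k; rewrite mxE; apply/eqP/negbFE/H.
have [x0 [x0j x0U]] : exists x0 : 'rV[F]_n, x0 0 j = 1 /\ x0 \in U.
  by exists ((y0 0 j)^-1 *: y0); rewrite mxE mulVf // memvZ.
pose lp : 'Hom('rV[F]_n, 'cV[F]_1) := linfun (@col F 1 n j).
have lpE y : (y \in lker lp) = (y 0 j == 0) by rewrite memv_ker lfunE col1E.
pose H0 := (U :&: lker lp)%VS.
have H0P y : (y \in H0) = (y \in U) && (y 0 j == 0) by rewrite memv_cap lpE.
have dH0 : \dim H0 = d.
  have := limg_ker_dim lp U; rewrite dU.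
  have le1 : (\dim (lp @: U) <= 1)%N.
    by apply: leq_trans (dimvS (subvf _)) _; rewrite dimvf.
  have ge1 : (0 < \dim (lp @: U))%N.
    rewrite lt0n dimv_eq0; apply/negP => /eqP H.
    by have := memv_img lp x0U; rewrite H memv0 lfunE col1E x0j oner_eq0.
  have e1 : \dim (lp @: U) = 1%N by apply/eqP; rewrite eqn_leq le1 ge1.
  by move=> H; move: H; rewrite e1 addn1 => -[].
pose Xh := vbasis H0.
have XhH0 (i : 'I_(\dim H0)) : Xh`_i \in H0 := vbasis_nth_mem i.
have linLz : linear (fun u : 'M[F]_n => (col j (bmx H0 *m u))^T).
  by move=> a u v /=; rewrite !linearP.
have [Lz LzE0] := hom_of_linear linLz.
have LzE u i : Lz u 0 i = (Xh`_i *m u) 0 j.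
  by rewrite LzE0 /bmx !mxE; apply: eq_bigr => k _; rewrite !mxE.
have linLy : linear (fun v : 'M[F]_n => \row_(i < \dim H0) coord Xh i (x0 *m v)).
  by move=> a u v /=; apply/rowP => i; rewrite !mxE !linearP.
have [Ly LyE0] := hom_of_linear linLy.
have LyE v i : Ly v 0 i = coord Xh i (x0 *m v) by rewrite LyE0 mxE.
pose W1 := (W :&: lker Lz)%VS.
have W1P u : u \in W1 -> u \in W /\ forall i : 'I_(\dim H0), (Xh`_i *m u) 0 j = 0.
  rewrite memv_cap memv_ker => /andP [uW /eqP H]; split => // i.
  by have := congr1 (fun r : 'rV[F]_(\dim H0) => r 0 i) H; rewrite LzE => ->; rewrite mxE.
have A1 u h : u \in W1 -> h \in H0 -> (h *m u) 0 j = 0.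
  move=> /W1P [_ Hu] hH; rewrite (coord_vbasis hH) mulmx_suml summxE big1 // => i _.
  by rewrite -scalemxAl entryZ Hu mulr0.
have A1' u h : u \in W1 -> h \in H0 -> h *m u \in H0.
  move=> uW1 hH; rewrite H0P (A1 u h) // eqxx andbT.
  have [uW _] := W1P u uW1; apply: (HW u uW).2; move: hH; rewrite H0P => /andP[].
  by [].
have A2 u : u \in W1 -> x0 *m u \in H0.
  move=> uW1; have [uW _] := W1P u uW1; have [nu iu] := HW u uW.
  set c := (x0 *m u) 0 j.
  have dH : x0 *m u - c *: x0 \in H0.
    by rewrite H0P rpredB ?rpredZ ?iu //= entryBZ x0j mulr1 subrr eqxx.
  have step m : x0 *m u ^+ m - c ^+ m *: x0 \in H0.
    elim: m => [|m IHm]; first by rewrite expr0 mulmx1 scale1r subrr mem0v.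
    have -> : x0 *m u ^+ m.+1 - c ^+ m.+1 *: x0 =
        (x0 *m u ^+ m - c ^+ m *: x0) *m u + c ^+ m *: (x0 *m u - c *: x0).
      by rewrite mulmx_exprS mulmxBl -scalemxAl scalerBr scalerA -exprSr addrA subrK.
    by rewrite rpredD ?rpredZ ?A1'.
  case: (nilp_succ nu) => N HN.
  have := step N.+1; rewrite HN mulmx0 sub0r rpredN H0P => /andP [_].
  rewrite entryZ x0j mulr1 expf_eq0 /= => c0.
  by rewrite H0P iu //= -/c.
have splt y : y \in U -> y - y 0 j *: x0 \in H0.
  by move=> yU; rewrite H0P rpredB ?rpredZ //= entryBZ x0j mulr1 subrr eqxx.
have A3 u y : u \in W1 -> y \in U -> y *m u \in H0.
  move=> uW1 yU; rewrite -(subrK (y 0 j *: x0) y).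
  by rewrite mulmxDl -scalemxAl; apply: rpredD; [apply: A1' => //; apply: splt | apply/rpredZ/A2].
have HW1 u : u \in W1 -> mx_nilpotent u /\ (forall y, y \in H0 -> y *m u \in H0).
  move=> uW1; have [uW _] := W1P u uW1; split; first exact: (HW u uW).1.
  by move=> y; rewrite H0P => /andP [yU _]; apply: A3.
have IHW1 := IH H0 W1 dH0 HW1.
pose W2 := (W1 :&: ann H0)%VS.
have vU v y : v \in W2 -> y \in U -> y *m v = y 0 j *: (x0 *m v).
  rewrite memv_cap => /andP [_ /annP Hv] yU.
  by rewrite -{1}(subrK (y 0 j *: x0) y) mulmxDl Hv ?splt // add0r scalemxAl.
have W2W1 v : v \in W2 -> v \in W1 by rewrite memv_cap => /andP[].
have W2W v : v \in W2 -> v \in W by move/W2W1/W1P => [].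
have R u v : u \in W -> v \in W2 -> (x0 *m v *m u) 0 j = 0.
  move=> uW vW2; have vW := W2W v vW2.
  set w := x0 *m v.
  have AW : u + v \in W by rewrite memvD.
  have [[NA HA] iA] := HW _ AW; have [[Nu Hu] iu] := HW _ uW.
  have wU : w \in U by rewrite /w (HW v vW).2.
  pose a m := (w *m (u + v) ^+ m) 0 j.
  pose h m := (w *m u ^+ m) 0 j.
  have ident m y : y \in U -> y *m (u + v) ^+ m = y *m u ^+ m +
      \sum_(i < m) (y *m (u + v) ^+ i) 0 j *: (w *m u ^+ (m - i.+1)).
    elim: m y => [|m IHm] y yU; first by rewrite big_ord0 addr0 !expr0.
    rewrite mulmx_exprS mulmxDr (vU v _ vW2 (inv_pow iA m yU)) {1}IHm //.
    rewrite mulmxDl mulmx_suml -mulmx_exprS big_ord_recr /= subnn expr0 mulmx1 addrA.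
    congr (_ + _ + _); apply: eq_bigr => i _.
    by rewrite -scalemxAl -mulmx_exprS subSS subnSK.
  have rec m : a m = h m + \sum_(i < m) a i * h (m - i.+1)%N.
    rewrite /a (ident m w wU) entryD summxE; congr (_ + _).
    by apply: eq_bigr => i _; rewrite entryZ.
  have := conv_zero (N := maxn NA Nu) _ _ rec 1.
  rewrite /h expr1; apply.
    move=> m Hm; rewrite /a (nilp_ge HA) ?mulmx0 ?mxE //.
    exact: leq_trans (leq_maxl _ _) Hm.
  move=> m Hm; rewrite /h (nilp_ge Hu) ?mulmx0 ?mxE //.
  exact: leq_trans (leq_maxr _ _) Hm.
have d1 : (\dim W1 + \dim (Lz @: W) = \dim W)%N := limg_ker_dim Lz W.
have d2 : (\dim (W2 :&: lker Ly) + \dim (Ly @: W2) = \dim W2)%N := limg_ker_dim Ly W2.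
have s3 : (W2 :&: lker Ly <= W :&: ann U)%VS.
  apply/subvP => v; rewrite memv_cap memv_ker => /andP [vW2 /eqP Hv].
  have x0v : x0 *m v = 0.
    rewrite (coord_vbasis (A2 v (W2W1 v vW2))) big1 // => i _.
    have := congr1 (fun r : 'rV[F]_(\dim H0) => r 0 i) Hv; rewrite LyE => ->.
    by rewrite mxE scale0r.
  rewrite memv_cap W2W //=.
  by apply/annP => y yU; rewrite (vU v y vW2 yU) x0v scaler0.
have orth : (\dim (Ly @: W2) + \dim (Lz @: W) <= \dim H0)%N.
  apply: ortho => y z /memv_imgP [v vW2 ->] /memv_imgP [u uW ->].
  apply/matrixP => a b; rewrite !ord1 [RHS]mxE -(R u v uW vW2).
  rewrite (coord_vbasis (A2 v (W2W1 v vW2))) mulmx_suml summxE mxE.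
  apply: eq_bigr => i _; rewrite [(_^T) _ _]mxE LyE LzE -scalemxAl entryZ.
  by [].
have := dimvS s3.
rewrite binS bin1 => s3d.
have IH2 : (\dim W1 <= 'C(d, 2) + \dim W2)%N := IHW1.
move: d1 d2 IH2 orth s3d dH0; lia.
Qed.
End Gerst.


Section Sym.
Variable F : fieldType.

Lemma ord_split m (i : 'I_(1 + m)) : i = ord0 \/ exists k, i = rshift 1 k.
Proof.
case: (splitP i) => [j Hj|k Hk]; [left|right; exists k]; apply/val_inj => //=.
by rewrite Hj ord1.
Qed.

Lemma sym_count m : forall Z : {vspace 'M[F]_m},
  (forall S, S \in Z -> S^T = S) -> (\dim Z <= 'C(m.+1, 2))%N.
Proof.
elim: m => [|m IH] Z HZ.
  by apply: leq_trans (dimvS (subvf Z)) _; rewrite dimvf /dim /= muln0.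
pose f1 : 'Hom('M[F]_m.+1, 'rV[F]_m.+1) := linfun (@row F m.+1 m.+1 0).
have lin2 : linear (fun S : 'M[F]_m.+1 => drsubmx (S : 'M_(1 + m))).
  by move=> a A B; rewrite /drsubmx !linearP.
have [f2 f2E] := hom_of_linear lin2.
pose Z0 := (Z :&: lker f1)%VS.
have d1 : (\dim Z0 + \dim (f1 @: Z) = \dim Z)%N := limg_ker_dim f1 Z.
have d1' : (\dim (f1 @: Z) <= 1 + m)%N.
  by apply: leq_trans (dimvS (subvf _)) _; rewrite dimvf /dim /= mul1n.
have inj : (Z0 :&: lker f2 = 0)%VS.
  apply/eqP; rewrite -subv0; apply/subvP => S; rewrite !memv_cap !memv_ker memv0 lfunE f2E /=.
  case/andP => [/andP [SZ /eqP r0] /eqP d0]; have St := HZ S SZ.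
  have Srow k : S ord0 k = 0.
    by have := congr1 (fun r : 'rV[F]_m.+1 => r 0 k) r0; rewrite !mxE.
  apply/eqP/matrixP => i j; rewrite [RHS]mxE.
  case: (ord_split i) => [->|[i' ->]]; first exact: Srow.
  case: (ord_split j) => [->|[j' ->]]; first by rewrite -St mxE Srow.
  by have := congr1 (fun M : 'M[F]_m => M i' j') d0; rewrite /drsubmx !mxE.
have symZ0 : forall S, S \in (f2 @: Z0)%VS -> S^T = S.
  move=> S /memv_imgP [S0 S0Z0 ->]; rewrite f2E trmx_drsub HZ //.
  by move: S0Z0; rewrite memv_cap => /andP[].
have := IH _ symZ0; rewrite limg_dim_eq // => IHZ.
rewrite binS bin1.
rewrite -d1; exact: leq_add IHZ d1'.
Qed.

Lemma alt_count m : forall Z : {vspace 'M[F]_m},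
  (forall S, S \in Z -> S^T = S /\ forall i, S i i = 0) -> (\dim Z <= 'C(m, 2))%N.
Proof.
elim: m => [|m IH] Z HZ.
  by apply: leq_trans (dimvS (subvf Z)) _; rewrite dimvf /dim /= muln0.
have lin1 : linear (fun S : 'M[F]_m.+1 => ursubmx (S : 'M_(1 + m))).
  by move=> a A B; rewrite /ursubmx !linearP.
have [f1 f1E] := hom_of_linear lin1.
have lin2 : linear (fun S : 'M[F]_m.+1 => drsubmx (S : 'M_(1 + m))).
  by move=> a A B; rewrite /drsubmx !linearP.
have [f2 f2E] := hom_of_linear lin2.
pose Z0 := (Z :&: lker f1)%VS.
have d1 : (\dim Z0 + \dim (f1 @: Z) = \dim Z)%N := limg_ker_dim f1 Z.
have d1' : (\dim (f1 @: Z) <= m)%N.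
  by apply: leq_trans (dimvS (subvf _)) _; rewrite dimvf /dim /= mul1n.
have inj : (Z0 :&: lker f2 = 0)%VS.
  apply/eqP; rewrite -subv0; apply/subvP => S; rewrite !memv_cap !memv_ker memv0 f1E f2E /=.
  case/andP => [/andP [SZ /eqP r0] /eqP d0]; have [St Sd] := HZ S SZ.
  have Srow k : S ord0 k = 0.
    case: (ord_split k) => [->|[k' ->]]; first exact: Sd.
    have := congr1 (fun r : 'rV[F]_m => r 0 k') r0; rewrite /ursubmx !mxE => <-.
    by congr (S _ _); apply/val_inj.
  apply/eqP/matrixP => i j; rewrite [RHS]mxE.
  case: (ord_split i) => [->|[i' ->]]; first exact: Srow.
  case: (ord_split j) => [->|[j' ->]]; first by rewrite -St mxE Srow.
  by have := congr1 (fun M : 'M[F]_m => M i' j') d0; rewrite /drsubmx !mxE.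
have symZ0 : forall S, S \in (f2 @: Z0)%VS -> S^T = S /\ forall i, S i i = 0.
  move=> S /memv_imgP [S0 S0Z0 ->]; rewrite f2E.
  move: S0Z0; rewrite memv_cap => /andP [S0Z _]; have [St Sd] := HZ S0 S0Z.
  by split; [rewrite trmx_drsub St | move=> i; rewrite /drsubmx !mxE Sd].
have := IH _ symZ0; rewrite limg_dim_eq // => IHZ.
rewrite binS bin1.
rewrite -d1; exact: leq_add IHZ d1'.
Qed.
End Sym.


Section Ent.
Variable F : fieldType.
Lemma mxentD p q (A B : 'M[F]_(p, q)) i j : (A + B) i j = A i j + B i j.
Proof. by rewrite !mxE. Qed.
Lemma mxentZ p q (A : 'M[F]_(p, q)) (c : F) i j : (c *: A) i j = c * A i j.
Proof. by rewrite !mxE. Qed.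
Lemma mxentT p q (A : 'M[F]_(p, q)) i j : A^T i j = A j i.
Proof. by rewrite !mxE. Qed.
Lemma mxent0 p q i j : (0 : 'M[F]_(p, q)) i j = 0.
Proof. by rewrite !mxE. Qed.
End Ent.

Section Forms.
Variables (F : fieldType) (n : nat) (B : 'M[F]_n).

Lemma bformDr x y z : bform B x (y + z) = bform B x y + bform B x z.
Proof. by rewrite /bform linearD mulmxDr mxentD. Qed.
Lemma bformZr x c y : bform B x (c *: y) = c * bform B x y.
Proof. by rewrite /bform linearZ /= -scalemxAr mxentZ. Qed.
Lemma bformDl x y z : bform B (x + y) z = bform B x z + bform B y z.
Proof. by rewrite /bform !mulmxDl mxentD. Qed.
Lemma bformZl x c y : bform B (c *: x) y = c * bform B x y.
Proof. by rewrite /bform -!scalemxAl mxentZ. Qed.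
Lemma bform0r x : bform B x 0 = 0.
Proof. by rewrite /bform linear0 mulmx0 mxent0. Qed.
Lemma bform0l x : bform B 0 x = 0.
Proof. by rewrite /bform !mul0mx mxent0. Qed.
Lemma bform_sumr x I (r : seq I) (P : pred I) (f : I -> 'rV[F]_n) :
  bform B x (\sum_(i <- r | P i) f i) = \sum_(i <- r | P i) bform B x (f i).
Proof.
elim/big_rec2: _ => [|i y1 y2 _ <-]; first exact: bform0r.
by rewrite bformDr.
Qed.
Lemma bform_suml x I (r : seq I) (P : pred I) (f : I -> 'rV[F]_n) :
  bform B (\sum_(i <- r | P i) f i) x = \sum_(i <- r | P i) bform B (f i) x.
Proof.
elim/big_rec2: _ => [|i y1 y2 _ <-]; first exact: bform0l.
by rewrite bformDl.
Qed.

Hypothesis HBsym : B^T = B.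

Lemma bformC x y : bform B x y = bform B y x.
Proof.
rewrite /bform; transitivity ((x *m B *m y^T)^T 0 0); first by rewrite mxentT.
by rewrite !trmx_mul trmxK HBsym mulmxA.
Qed.

Lemma Sb_adj M x y : in_Sb B M -> bform B (x *m M) y = bform B x (y *m M).
Proof. by move=> HM; rewrite bformC HM. Qed.

Lemma Sb_adjX M x y a : in_Sb B M -> bform B (x *m M ^+ a) y = bform B x (y *m M ^+ a).
Proof.
move=> HM; elim: a x y => [|a IH] x y; first by rewrite !expr0 !mulmx1.
by rewrite mulmx_exprS Sb_adj // IH exprS mulmxA.
Qed.

Lemma Ab_Sb (HF : 2%N \in [pchar F]) M : in_Ab B M -> in_Sb B M.
Proof.
move=> HM x y; have := HM (x + y).
rewrite mulmxDl !bformDl !bformDr !HM add0r addr0 => /eqP.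
by rewrite addr_eq0 oppr_pchar2 // => /eqP.
Qed.

Lemma form_zero (z : 'rV[F]_n) : B \in unitmx -> (forall x, bform B x z = 0) -> z = 0.
Proof.
move=> uB Hz.
have H : B *m z^T = 0.
  apply/matrixP => i j; rewrite !ord1 mxent0 -(Hz (delta_mx 0 i)) /bform -mulmxA.
  by rewrite -rowE [RHS]mxE.
by rewrite -[z]trmxK -(mulKmx uB z^T) H mulmx0 trmx0.
Qed.

Lemma mx_zero_rows (M : 'M[F]_n) : (forall y : 'rV[F]_n, y *m M = 0) -> M = 0.
Proof. by move=> H; apply/row_matrixP => i; rewrite rowE H row0. Qed.
End Forms.

Section Main.
Variables (F : fieldType) (n : nat) (B : 'M[F]_n) (K : {vspace 'rV[F]_n}).
Hypotheses (HBsym : B^T = B) (HBnd : B \in unitmx).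
Hypothesis HK : forall x : 'rV[F]_n, (x \in K) = (qform B x == 0).
Hypothesis HKsing : forall x y : 'rV[F]_n, x \in K -> y \in K -> bform B x y = 0.

Local Notation nu := (\dim K).
Let KM := bmx K.
Let Kb := vbasis K.

Lemma factB M y : in_Sb B M -> mx_nilpotent M -> (forall k, k \in K -> bform B y k = 0) ->
  forall s, (0 < s)%N -> y *m M ^+ s \in K.
Proof.
move=> HS [N HN] Hy.
suff H : forall k s, (N <= s + k)%N -> (0 < s)%N -> y *m M ^+ s \in K.
  by move=> s s0; apply: (H N s) => //; rewrite leq_addl.
elim=> [|k IH] s Ns s0.
  by rewrite addn0 in Ns; rewrite (nilp_ge HN Ns) mulmx0 mem0v.
rewrite HK /qform Sb_adjX // -mulmxA mulmxE -exprD.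
rewrite Hy ?eqxx //; apply: IH => //; last by rewrite addn_gt0 s0.
by move: Ns s0; lia.
Qed.

Lemma entry_phi y i : (y *m (B *m KM^T)) 0 i = bform B y Kb`_i.
Proof.
rewrite /bform mulmxA !mxE; apply: eq_bigr => k _; rewrite !mxE.
by [].
Qed.

Let phi : 'Hom('rV[F]_n, 'rV[F]_nu) := linfun (mulmxr (B *m KM^T)).
Definition Kp := lker phi.

Lemma KpP y : reflect (forall k, k \in K -> bform B y k = 0) (y \in Kp).
Proof.
rewrite /Kp memv_ker lfunE /=.
apply: (iffP eqP) => [H k kK | H].
  rewrite (coord_vbasis kK) bform_sumr big1 // => i _.
  by rewrite bformZr -entry_phi H mxent0 mulr0.
apply/rowP => i; rewrite entry_phi mxent0 H //; exact: vbasis_nth_mem.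
Qed.

Lemma K_Kp : (K <= Kp)%VS.
Proof. by apply/subvP => y yK; apply/KpP => k kK; apply: HKsing. Qed.

Lemma dim_Kp : \dim Kp = (n - nu)%N.
Proof.
have dl i : delta_mx 0 i \in (phi @: fullv)%VS.
  have fX : free Kb by apply: basis_free (vbasisP K).
  have := dual_basis (i := val i) fX; rewrite size_tuple => /(_ (ltn_ord i)) [z zP].
  suff -> : delta_mx 0 i = phi (z^T *m invmx B) by apply: memv_img; apply: memvf.
  apply/rowP => j; rewrite lfunE /= entry_phi /bform -[z^T *m _ *m B]mulmxA mulVmx // mulmx1.
  have -> : z^T *m (Kb`_j)^T = (Kb`_j *m z)^T by rewrite trmx_mul.
  by rewrite mxentT (zP j (ltn_ord j)) !mxE eqxx mulr1n (inj_eq val_inj) eq_sym.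
have img : (phi @: fullv)%VS = fullv.
  apply/eqP; rewrite eqEsubv subvf /=; apply/subvP => r _.
  rewrite (row_sum_delta r); apply: rpred_sum => i _; exact/rpredZ/dl.
have := limg_ker_dim phi fullv.
rewrite img capfv => H.
have dZ : \dim (fullv : {vspace 'rV[F]_nu}) = nu by rewrite dimvf /dim /= mul1n.
have de : \dim (fullv : {vspace 'rV[F]_n}) = n by rewrite dimvf /dim /= mul1n.
by rewrite dZ de in H; exact: canRL (addnK nu) H.
Qed.

Lemma nu_le : (nu + nu <= n)%N.
Proof.
have := dimvS K_Kp; rewrite dim_Kp => H.
have : (nu <= n)%N.
  by apply: leq_trans (dimvS (subvf K)) _; rewrite dimvf /dim /= mul1n.
move: H; lia.
Qed.

Let G := (Kp :\: K)%VS.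
Let Fp := (Kp^C)%VS.

Lemma dim_G : \dim G = (n - nu - nu)%N.
Proof.
have := dimv_cap_compl Kp K; rewrite (capv_idPr K_Kp) dim_Kp => H.
by rewrite -H addKn.
Qed.

Lemma Kp_split y : y \in Kp -> exists2 g, g \in G & exists2 k, k \in K & y = g + k.
Proof.
have := addv_diff_cap Kp K; rewrite (capv_idPr K_Kp) => E.
by rewrite -{1}E => /memv_addP.
Qed.

Lemma dim_Fp : \dim Fp = nu.
Proof.
rewrite dimv_compl dim_Kp dimvf /dim /= mul1n.
have := nu_le; lia.
Qed.

Lemma full_split y : exists2 p, p \in Kp & exists2 q, q \in Fp & y = p + q.
Proof.
have : y \in (Kp + Fp)%VS by rewrite addv_complf memvf.
by move/memv_addP.
Qed.

Lemma core (alt : bool) (W : {vspace 'M[F]_n}) :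
  (forall u, u \in W -> [/\ in_Sb B u, mx_nilpotent u & (alt -> in_Ab B u)]) ->
  (\dim W <= 'C(nu, 2) + \dim G * nu + (if alt then 'C(nu, 2) else 'C(nu.+1, 2)))%N.
Proof.
move=> HW.
have KpK u y : u \in W -> y \in Kp -> y *m u \in K.
  move=> uW /KpP yKp; have [S N _] := HW u uW.
  by have := factB S N yKp (s := 1) isT; rewrite expr1.
have HWg : forall u, u \in W -> mx_nilpotent u /\ (forall y, y \in K -> y *m u \in K).
  move=> u uW; have [_ N _] := HW u uW; split => // y yK.
  by apply: KpK => //; apply: (subvP K_Kp).
have Hg := @gerst F n nu K W erefl HWg.
pose W0 := (W :&: ann K)%VS.
have /fin_all_exists [zf zfP] : forall i : 'I_nu, exists z : 'cV[F]_n,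
    forall j : 'I_nu, Kb`_j *m z = ((i == j)%:R)%:M.
  move=> i.
  have fX : free Kb by apply: basis_free (vbasisP K).
  have := dual_basis (i := val i) fX; rewrite size_tuple => /(_ (ltn_ord i)) [z zP].
  by exists z => j; rewrite zP // (inj_eq val_inj).
have Kinj w : w \in K -> (forall i, w *m zf i = 0) -> w = 0.
  move=> wK Hw; rewrite (coord_vbasis wK) big1 // => i _.
  have := Hw i; rewrite {1}(coord_vbasis wK) mulmx_suml (bigD1 i) //= big1.
    by rewrite -scalemxAl zfP eqxx addr0 => /matrixP/(_ 0 0); rewrite mxentZ !mxE mulr1 => ->; rewrite scale0r.
  by move=> j /negbTE ji; rewrite -scalemxAl zfP eq_sym ji raddf0 scaler0.
pose CM : 'M[F]_(n, nu) := \matrix_(a, i) zf i a 0.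
have CME (r : 'rV[F]_n) i : (r *m CM) 0 i = (r *m zf i) 0 0.
  by rewrite !mxE; apply: eq_bigr => a _; rewrite !mxE.
pose Gb := vbasis G.
have lin1 : linear (fun u : 'M[F]_n => mulmxr CM (bmx G *m u)).
  by move=> a x y /=; rewrite !linearP mulmxDl -scalemxAl.
have [t1 t1E] := hom_of_linear lin1.
have t1row u j : row j (t1 u) = Gb`_j *m u *m CM.
  by rewrite t1E /= !row_mul /bmx rowK.
pose W00 := (W0 :&: lker t1)%VS.
have d0 : (\dim W00 + \dim (t1 @: W0) = \dim W0)%N := limg_ker_dim t1 W0.
have dt1 : (\dim (t1 @: W0) <= \dim G * nu)%N.
  by apply: leq_trans (dimvS (subvf _)) _; rewrite dimvf.
have W00W u : u \in W00 -> u \in W.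
  by rewrite !memv_cap => /andP [/andP [->]].
have Kp0 u y : u \in W00 -> y \in Kp -> y *m u = 0.
  rewrite !memv_cap => /andP [/andP [uW /annP uK]]; rewrite memv_ker => /eqP t0 yKp.
  have [g gG [k kK ->]] := Kp_split yKp.
  rewrite mulmxDl (uK k kK) addr0 (coord_vbasis gG) mulmx_suml big1 // => j _.
  have GKp : Gb`_j \in Kp by apply: (subvP (diffvSl Kp K)); exact: vbasis_nth_mem.
  rewrite -scalemxAl (Kinj (Gb`_j *m u)) ?scaler0 ?KpK // => i.
  apply/matrixP => a b; rewrite !ord1 -CME -t1row t0 !mxE.
  by [].
pose Fb := vbasis Fp.
have lin2 : linear (fun u : 'M[F]_n =>
    \matrix_(i < \dim Fp, j < \dim Fp) bform B Fb`_i (Fb`_j *m u)).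
  by move=> a x y /=; apply/matrixP => i j; rewrite !mxE linearP bformDr bformZr.
have [t2 t2E] := hom_of_linear lin2.
have t2e u i j : t2 u i j = bform B Fb`_i (Fb`_j *m u) by rewrite t2E mxE.
have symt2 : forall S, S \in (t2 @: W00)%VS -> S^T = S /\ (alt -> forall i, S i i = 0).
  move=> S /memv_imgP [u uW00 ->]; have [Su _ Au] := HW u (W00W u uW00).
  split; first by apply/matrixP => i j; rewrite mxentT !t2e -(Sb_adj HBsym) // bformC.
  by move=> alt_ i; rewrite t2e (Au alt_).
have inj2 : (W00 :&: lker t2 = 0)%VS.
  apply/eqP; rewrite -subv0; apply/subvP => u.
  rewrite memv_cap memv_ker memv0 => /andP [uW00 /eqP t0].
  have [Su _ _] := HW u (W00W u uW00).
  have Hf (i j : 'I_(\dim Fp)) : bform B Fb`_i (Fb`_j *m u) = 0 by rewrite -t2e t0 mxent0.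
  apply/eqP; apply: mx_zero_rows => y; apply: (form_zero HBnd) => x.
  have [p pKp [q qFp ->]] := full_split y.
  rewrite mulmxDl (Kp0 u p uW00 pKp) add0r (coord_vbasis qFp) mulmx_suml bform_sumr.
  rewrite big1 // => j _; rewrite -scalemxAl bformZr.
  have [p' p'Kp [q' q'Fp ->]] := full_split x.
  rewrite bformDl -[bform B p' _](Sb_adj HBsym p' (Fb`_j) Su).
  rewrite (Kp0 u p' uW00 p'Kp) bform0l add0r (coord_vbasis q'Fp) bform_suml big1 ?mulr0 //.
  by move=> i _; rewrite bformZl Hf mulr0.
have d2 : \dim (t2 @: W00) = \dim W00 := limg_dim_eq inj2.
have c2 : (\dim (t2 @: W00) <= (if alt then 'C(nu, 2) else 'C(nu.+1, 2)))%N.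
  case: alt HW symt2 => HW symt2.
    have e : 'C(\dim Fp, 2) = 'C(nu, 2) by rewrite dim_Fp.
    rewrite -e; apply: alt_count => S /symt2 [St Sd]; split => //; exact: Sd.
  have e : 'C((\dim Fp).+1, 2) = 'C(nu.+1, 2) by rewrite dim_Fp.
  rewrite -e; apply: sym_count => S /symt2 [St _]; exact: St.
apply: leq_trans Hg _; rewrite -addnA leq_add2l -d0 addnC leq_add //.
by rewrite -d2.
Qed.
End Main.


Lemma bin2_2 m : ('C(m, 2) * 2 = m * m.-1)%N.
Proof.
elim: m => [|m IH] //; rewrite binS bin1 mulnDl IH.
case: m IH => [|m] _ //=; lia.
Qed.

Lemma arithS nu n : (nu + nu <= n)%N ->
  ('C(nu, 2) + (n - nu - nu) * nu + 'C(nu.+1, 2) <= nu * (n - nu))%N.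
Proof.
move=> H; rewrite binS bin1; have := bin2_2 nu.
move: ('C(nu, 2)) => c; case: nu H => [|m] H /=; first by lia.
nia.
Qed.

Lemma arithA nu n : (nu + nu <= n)%N ->
  ('C(nu, 2) + (n - nu - nu) * nu + 'C(nu, 2) <= nu * (n - nu - 1))%N.
Proof.
move=> H; have := bin2_2 nu.
move: ('C(nu, 2)) => c; case: nu H => [|m] H /=; first by lia.
nia.
Qed.

Unset Implicit Arguments.
Theorem proposition5p2 (F : fieldType) (n : nat)
  (HF : 2%N \in [pchar F])
  (B : 'M[F]_n) (HBsym : B^T = B) (HBnd : B \in unitmx)
  (K : {vspace 'rV[F]_n})
  (HK : forall x : 'rV[F]_n, (x \in K) = (qform B x == 0))
  (HKsing : forall x y : 'rV[F]_n, x \in K -> y \in K -> bform B x y = 0) :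
  let nu := \dim K in
  (forall W : {vspace 'M[F]_n},
     (forall u, u \in W -> in_Sb B u /\ mx_nilpotent u) ->
     (\dim W <= nu * (n - nu))%N)
  /\
  (forall W : {vspace 'M[F]_n},
     (forall u, u \in W -> in_Ab B u /\ mx_nilpotent u) ->
     (\dim W <= nu * (n - nu - 1))%N).
Proof.
move=> nu; have nle := nu_le HBnd HKsing.
have dG := dim_G HBnd HKsing.
split => W HW.
  apply: leq_trans (core HBsym HBnd HK HKsing (alt := false) (W := W) _) _.
    by move=> u /HW [Su Nu]; split.
  rewrite dG; exact: arithS.
apply: leq_trans (core HBsym HBnd HK HKsing (alt := true) (W := W) _) _.
  by move=> u /HW [Au Nu]; split; [exact: (@Ab_Sb F n B HF u Au) | exact: Nu | by []].
rewrite dG; exact: arithA.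
Qed.
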